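(* Let $k$ be a finite field of characteristic two and $(V,q)$ a quadratic space over $k$ with $\dim_k V=2n$ and $n\ge4$. Then the exact sequences $0\to\widehat V\to\mathrm{APs}_k(V)\to\mathrm{Sp}_k(V,\omega_q)\to1$, $0\to\widehat V\to\mathrm{Ps}_k(V,q)\to O_k(V,q)\to1$, $0\to\widehat V\to\widehat V\#_\theta\Omega_k(V,q)\to\Omega_k(V,q)\to1$ do not split.
   Context: $V$ is a finite-dimensional $k$-vector space with a quadratic form $q:V\to k$ whose polar form $B_q(v,w)=q(v+w)-q(v)-q(w)$ is non-degenerate. Let $\mathrm{Tr}:k\to\mathbb F_2$ be the absolute trace, $\omega_q(v,w)=(-1)^{\mathrm{Tr}(B_q(v,w))}$, and $\widehat V=\mathrm{Hom}(V,\mathbb C^* )$ the character group of the additive group $V$. $\mathrm{Sp}_k(V,\omega_q)=\mathrm{Sp}_k(V)$ is the group of $k$-linear automorphisms preserving $B_q$, $O_k(V,q)\le\mathrm{Sp}_k(V)$ those preserving $q$, and $\Omega_k(V,q)$ the index-$2$ subgroup of $O_k(V,q)$ of elements with Dickson invariant zero. Fix a normalized 2-cocycle $\alpha:V\times V\to\mathbb C^*$ with $\alpha(v,w)/\alpha(w,v)=\omega_q(v,w)$ and let $\mathbb C_\alpha[V]$ be the twisted group algebra (basis $u_v$, $u_vu_w=\alpha(v,w)u_{v+w}$). $\mathrm{APs}_k(V)$ (the linear affine pseudo-symplectic group, a crossed product $\widehat V\#_\theta\mathrm{Sp}_k(V)$) is the group under composition of all $\mathbb C$-algebra automorphisms $\varphi$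 of $\mathbb C_\alpha[V]$ for which there is $g\in\mathrm{Sp}_k(V)$ with $\varphi(u_v)\in\mathbb C^*u_{g(v)}$ for all $v\in V$; the map $\varphi\mapsto g$ is a surjection onto $\mathrm{Sp}_k(V)$ whose kernel is the group of automorphisms $u_v\mapsto\chi(v)u_v$, $\chi\in\widehat V$, identified with $\widehat V$. $\mathrm{Ps}_k(V,q)$ (the linear pseudo-symplectic group $\widehat V\#_\theta O_k(V,q)$) is the preimage of $O_k(V,q)$ in $\mathrm{APs}_k(V)$, and $\widehat V\#_\theta\Omega_k(V,q)$ is the preimage of $\Omega_k(V,q)$. The maps in the sequences are these inclusions and projections. *)

(* Defs.v *)
From HB Require Import structures.
From mathcomp Require Import all_boot all_order all_algebra all_field.
From mathcomp Require Import reals complex.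
Set Implicit Arguments. Unset Strict Implicit. Unset Printing Implicit Defensive.
Import Order.TTheory GRing.Theory Num.Theory.
Local Open Scope ring_scope.

(* The quadratic space V is modelled as the coordinate space 'rV[k]_m,   *)
(* m = dim V (every finite-dimensional k-space is isomorphic to one).   *)
Section QuadraticSpace.
Variables (k : finFieldType) (m : nat).
Local Notation V := 'rV[k]_m.

Definition polar (q : V -> k) (v w : V) : k := q (v + w) - q v - q w.

(* q is a quadratic form: q(a v) = a^2 q(v) and B_q is bilinear
   (B_q is symmetric by construction, so linearity in the first slot suffices). *)
Definition is_quadratic_form (q : V -> k) : Prop :=
  (forall (a : k) (v : V), q (a *: v) = a ^+ 2 * q v) /\
  (forall (a : k) (u v w : V), polar q (a *: u + v) w = a * polar q u w + polar q v w).

Definition polar_nondegenerate (q : V -> k) : Prop :=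
  forall v : V, (forall w : V, polar q v w = 0) -> v = 0.

Definition klinear (g : V -> V) : Prop :=
  forall (a : k) (v w : V), g (a *: v + w) = a *: g v + g w.

Definition in_Sp (q : V -> k) (g : V -> V) : Prop :=
  [/\ klinear g, bijective g & forall v w : V, polar q (g v) (g w) = polar q v w].

Definition in_O (q : V -> k) (g : V -> V) : Prop :=
  in_Sp q g /\ forall v : V, q (g v) = q v.

Definition dickson (g : V -> V) : bool := odd (\rank (1%:M - lin1_mx g)).

Definition in_Omega (q : V -> k) (g : V -> V) : Prop :=
  in_O q g /\ dickson g = false.

(* absolute trace k -> F_2 (k has 2^d elements; the value lies in {0,1}) *)
Definition abs_trace (x : k) : k := \sum_(i < logn 2 #|k|) x ^+ (2 ^ i).

End QuadraticSpace.

Section TwistedAlgebra.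
Variables (k : finFieldType) (m : nat) (R : realType).
Local Notation V := 'rV[k]_m.
Local Notation C := (R[i]).

Definition tr_sign (x : k) : C := if abs_trace x == 0 then 1 else -1.

Definition omega_q (q : V -> k) (v w : V) : C := tr_sign (polar q v w).

Definition good_cocycle (q : V -> k) (alpha : V -> V -> C) : Prop :=
  [/\ forall v w : V, alpha v w != 0,
      forall v : V, alpha 0 v = 1 /\ alpha v 0 = 1,
      forall u v w : V, alpha u v * alpha (u + v) w = alpha v w * alpha u (v + w)
    & forall v w : V, alpha v w / alpha w v = omega_q q v w].

(* The twisted group algebra C_alpha[V]: elements are functions V -> C,
   i.e. sum_v f(v) u_v. *)
Definition TAlg := {ffun V -> C}.

Definition u_ (v : V) : TAlg := [ffun x => (x == v)%:R].

(* twisted product: u_v u_w = alpha(v,w) u_{v+w} *)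
Definition tmul (alpha : V -> V -> C) (f g : TAlg) : TAlg :=
  [ffun x => \sum_(v : V) \sum_(w : V | v + w == x) f v * g w * alpha v w].

(* C-algebra automorphism of C_alpha[V] (unit is u_0) *)
Definition alg_aut (alpha : V -> V -> C) (phi : TAlg -> TAlg) : Prop :=
  [/\ forall (c : C) (f g : TAlg), phi (c *: f + g) = c *: phi f + phi g,
      bijective phi,
      forall f g : TAlg, phi (tmul alpha f g) = tmul alpha (phi f) (phi g)
    & phi (u_ 0) = u_ 0].

Definition lies_over (phi : TAlg -> TAlg) (g : V -> V) : Prop :=
  forall v : V, exists2 c : C, c != 0 & phi (u_ v) = c *: u_ (g v).

Definition in_APs (q : V -> k) (alpha : V -> V -> C) (phi : TAlg -> TAlg) : Prop :=
  alg_aut alpha phi /\ exists2 g, in_Sp q g & lies_over phi g.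

(* The extension 0 -> Vhat -> (preimage of H in APs_k(V)) -> H -> 1, for a
   subgroup H of Sp_k(V) given by the predicate P, splits: there is a group
   homomorphism s : H -> APs_k(V) with pi o s = id_H. *)
Definition ext_splits (alpha : V -> V -> C) (P : (V -> V) -> Prop) : Prop :=
  exists s : (V -> V) -> (TAlg -> TAlg),
    (forall g, P g -> alg_aut alpha (s g) /\ lies_over (s g) g) /\
    (forall g h, P g -> P h -> forall f : TAlg, s (g \o h) f = s g (s h f)).

End TwistedAlgebra.

(* Main.v *)
Require Import Defs.
From HB Require Import structures.
From mathcomp Require Import all_boot all_order all_algebra all_field.
From mathcomp Require Import reals complex.
From mathcomp Require Import ring zify.
From Stdlib Require Import FunctionalExtensionality.
Set Implicit Arguments. Unset Strict Implicit. Unset Printing Implicit Defensive.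
Import Order.TTheory GRing.Theory Num.Theory.
Local Open Scope ring_scope.
Section Trace.
Variable k : finFieldType.
Hypothesis char2 : 2%N \in [pchar k].

Lemma two0 : (2%:R : k) = 0. Proof. exact: pcharf0 char2. Qed.
Lemma add_same (x : k) : x + x = 0.
Proof. by rewrite -mulr2n -mulr_natr two0 mulr0. Qed.
Lemma oppE (x : k) : - x = x.
Proof. by rewrite -[-x]addr0 -(add_same x) addrA addNr add0r. Qed.

Lemma sqr_inj : injective (fun x : k => x ^+ 2).
Proof.
move=> x y /= /eqP; rewrite -subr_eq0 => /eqP h.
apply/eqP; rewrite -subr_eq0 -sqrf_eq0 sqrrB -mulr_natr two0 mulr0 subr0.
by rewrite -(oppE (y ^+ 2)) h.
Qed.

Lemma sqr_surj (y : k) : exists x, x ^+ 2 = y.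
Proof. by have [f fK Kf] := injF_bij sqr_inj; exists (f y); rewrite Kf. Qed.

Lemma trace_nz : exists y : k, abs_trace y != 0.
Proof.
set d := logn 2 #|k|.
have Hc : #|k| = (2 ^ d)%N := card_pprimeChar char2.
have d_gt0 : (0 < d)%N.
  by case: (posnP d) => // d0; move: (finNzRing_gt1 k); rewrite Hc d0.
have [y hy|Hall] := pickP (fun y : k => abs_trace y != 0); first by exists y.
exfalso.
pose p : {poly k} := \sum_(i < d) 'X^(2 ^ i).
have pE y : p.[y] = abs_trace y.
  by rewrite /p horner_sum /abs_trace; apply: eq_bigr => i _; rewrite hornerXn.
have pcoef j : p`_j = (\sum_(i < d) (j == 2 ^ i)%N%:R).
  by rewrite /p coef_sum; apply: eq_bigr => i _; rewrite coefXn.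
have pn0 : p != 0.
  apply/eqP => /(congr1 (fun r : {poly k} => r`_(2 ^ d.-1))); rewrite pcoef coef0.
  rewrite (bigD1 (Ordinal (etrans (ltn_predL d) d_gt0 : (d.-1 < d)%N))) //= eqxx big1 ?addr0.
    by move/eqP; rewrite oner_eq0.
  move=> i /eqP ni; rewrite eqn_exp2l //; case: eqP => // e.
  by case: ni; apply: val_inj; rewrite /= e.
have sp : (size p <= (2 ^ d.-1).+1)%N.
  apply/leq_sizeP => j hj; rewrite pcoef big1 // => i _.
  case: eqP => // ej; move: hj; rewrite ej ltnNge => /negP; case.
  by rewrite leq_exp2l // -ltnS prednK.
have ha : all (root p) (enum k).
  by apply/allP => y _; rewrite /root pE; move: (Hall y) => /negbFE.
have := max_poly_roots pn0 ha (enum_uniq k).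
rewrite -cardE => /leq_trans/(_ sp); rewrite Hc ltnS leq_exp2l // -ltnS prednK //.
by rewrite ltnn.
Qed.

Lemma trace_sq_nz : exists l : k, abs_trace (l ^+ 2) != 0.
Proof. by have [y hy] := trace_nz; have [l hl] := sqr_surj y; exists l; rewrite hl. Qed.
End Trace.
Section SplitA.
Variables (k : finFieldType) (m : nat) (R : realType).
Local Notation V := 'rV[k]_m.
Local Notation C := (R[i]).
Local Notation U v := (u_ R v).
Variable q : V -> k.
Hypothesis char2 : 2%N \in [pchar k].
Variable alpha : V -> V -> C.
Hypothesis ha : good_cocycle q alpha.

Lemma scC (c y : C) : c *: y = c * y. Proof. by []. Qed.

Lemma tmul_u v w : tmul alpha (U v) (U w) = alpha v w *: U (v + w).
Proof.
apply/ffunP => x; rewrite !ffunE -[RHS]/(alpha v w * (x == v + w)%:R).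
rewrite (bigD1 v) //= [X in _ + X]big1 ?addr0 => [|v' nv']; last first.
  by apply: big1 => w' _; rewrite ffunE (negbTE nv') mul0r mul0r.
have [exw | nexw] := eqVneq (v + w) x.
  rewrite (bigD1 w) ?exw //= [X in _ + X]big1 ?addr0 => [|w' /andP[_ nw']].
    by rewrite !ffunE !eqxx /= !mul1r mulr1.
  by rewrite !ffunE (negbTE nw') mulr0 mul0r.
rewrite big1 => [|w' /eqP ew'].
  by rewrite mulr0.
rewrite [U w w']ffunE; case: eqP => [ww|_]; last by rewrite mulr0 mul0r.
by move: nexw; rewrite -ww ew' eqxx.
Qed.

Lemma tmulZ a b f g : tmul alpha (a *: f) (b *: g) = (a * b) *: tmul alpha f g.
Proof.
apply/ffunP => x; rewrite !ffunE scaler_sumr; apply: eq_bigr => v _.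
rewrite scaler_sumr; apply: eq_bigr => w _; rewrite !ffunE.
rewrite !scC; ring.
Qed.

Lemma aut_Z phi : alg_aut alpha phi -> forall c f, phi (c *: f) = c *: phi f.
Proof.
case=> lin _ _ _ c f.
have phi0 : phi 0 = 0.
  have := lin 1 0 0; rewrite scaler0 addr0 scale1r.
  by rewrite -{1}(add0r (phi 0)) => /addIr <-.
by have := lin c f 0; rewrite addr0 phi0 addr0.
Qed.

Lemma invol_coef (g : V -> V) (phi : TAlg k m R -> TAlg k m R) :
  alg_aut alpha phi -> lies_over phi g -> (forall f, phi (phi f) = f) ->
  (forall v, g (g v) = v) -> (forall u v, g (u + v) = g u + g v) ->
  (forall v, q (g v) = q v) ->
  forall w, phi (U (w + g w)) = tr_sign R (q (w + g w)) *: U (w + g w).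
Proof.
move=> aut lo inv ginv gadd gq w.
have phiZ := aut_Z aut.
have [_ _ mult _] := aut.
have [anz _ _ aom] := ha.
have [c1 _ e1] := lo w.
have [c2 _ e2] := lo (g w); rewrite ginv in e2.
have c12 : c1 * c2 = 1.
  have := inv (U w); rewrite e1 phiZ e2 scalerA => /(congr1 (fun f : TAlg k m R => f w)).
  by rewrite !ffunE eqxx scC mulr1.
set x := w + g w.
have gx : g x = x by rewrite /x gadd ginv addrC.
have [c _ ex] := lo x; rewrite gx in ex.
have e : alpha w (g w) * c = alpha (g w) w.
  have := mult (U w) (U (g w)); rewrite tmul_u phiZ ex e1 e2 tmulZ c12 scale1r.
  rewrite tmul_u scalerA => /(congr1 (fun f : TAlg k m R => f x)); rewrite !ffunE.
  by rewrite /x addrC eqxx !scC !mulr1.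
rewrite ex; congr (_ *: _).
have -> : c = alpha (g w) w / alpha w (g w) by rewrite -e [_ * c]mulrC mulfK.
rewrite aom /omega_q /polar gq [g w + w]addrC -/x.
have -> : q x - q w - q w = q x.
  by rewrite -addrA -opprD -mulr2n -mulr_natr (pcharf0 char2) mulr0 subr0.
by [].
Qed.

Lemma no_split (P : (V -> V) -> Prop) (g h : V -> V) (x w1 w2 w3 : V) :
  P id -> P g -> P h -> P (g \o h) ->
  (forall v, g (g v) = v) -> (forall v, h (h v) = v) -> (forall v, g (h v) = h (g v)) ->
  (forall u v, g (u + v) = g u + g v) -> (forall u v, h (u + v) = h u + h v) ->
  (forall v, q (g v) = q v) -> (forall v, q (h v) = q v) ->
  x = w1 + g w1 -> x = w2 + h w2 -> x = w3 + g (h w3) ->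
  abs_trace (q x) != 0 -> ~ ext_splits alpha P.
Proof.
move=> Pid Pg Ph Pgh ginv hinv gh gadd hadd gq hq e1 e2 e3 tr [s [Hs Hhom]].
have sid f : s id f = f.
  have [[_ [si K1 _] _ _] _] := Hs id Pid.
  have E := Hhom id id Pid Pid f.
  change (s id f = s id (s id f)) in E.
  by apply: (can_inj K1); rewrite -E.
have sinv g0 (Pg0 : P g0) (ginv0 : forall v, g0 (g0 v) = v) f : s g0 (s g0 f) = f.
  rewrite -(Hhom _ _ Pg0 Pg0) (_ : g0 \o g0 = id) ?sid //.
  by apply: functional_extensionality => v; exact: ginv0.
have ghinv v : (g \o h) ((g \o h) v) = v by rewrite /= -gh hinv ginv.
have ghadd u v : (g \o h) (u + v) = (g \o h) u + (g \o h) v by rewrite /= hadd gadd.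
have ghq v : q ((g \o h) v) = q v by rewrite /= gq hq.
have [ag log] := Hs g Pg.
have [ah loh] := Hs h Ph.
have [agh logh] := Hs _ Pgh.
have Eg := invol_coef ag log (sinv g Pg ginv) ginv gadd gq w1.
have Eh := invol_coef ah loh (sinv h Ph hinv) hinv hadd hq w2.
have Egh := invol_coef agh logh (sinv _ Pgh ghinv) ghinv ghadd ghq w3.
rewrite -e1 in Eg; rewrite -e2 in Eh; rewrite /= -e3 in Egh.
have := Hhom g h Pg Ph (U x); rewrite Egh Eh (aut_Z ag) Eg scalerA.
move=> /(congr1 (fun f : TAlg k m R => f x)); rewrite !ffunE eqxx !scC !mulr1.
rewrite /tr_sign (negbTE tr) mulrNN mulr1 => /eqP.
by rewrite -subr_eq0 -opprD oppr_eq0 -mulr2n pnatr_eq0.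
Qed.
End SplitA.

Section Basic.
Variables (k : finFieldType) (n : nat).
Hypothesis char2 : 2%N \in [pchar k].
Variable q : 'rV[k]_(n.*2) -> k.
Hypothesis hq : is_quadratic_form q.
Local Notation N := (n.*2).
Local Notation V := 'rV[k]_N.
Local Notation B := (polar q).

Lemma vv (v : V) : v + v = 0.
Proof. by rewrite -{1}[v]scale1r -{2}[v]scale1r -scalerDl add_same // scale0r. Qed.
Lemma q0 : q 0 = 0.
Proof. by have := hq.1 0 0; rewrite scale0r expr0n /= mul0r. Qed.
Lemma Bsym u v : B u v = B v u.
Proof. by rewrite /polar [u + v]addrC -addrA [- q u + _]addrC addrA. Qed.
Lemma B0l w : B 0 w = 0.
Proof. by rewrite /polar add0r q0 subr0 subrr. Qed.
Lemma BDl u v w : B (u + v) w = B u w + B v w.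
Proof. by have := hq.2 1 u v w; rewrite scale1r mul1r. Qed.
Lemma BZl a u w : B (a *: u) w = a * B u w.
Proof. by have := hq.2 a u 0 w; rewrite addr0 B0l addr0. Qed.
Lemma B0r w : B w 0 = 0. Proof. by rewrite Bsym B0l. Qed.
Lemma BDr u v w : B w (u + v) = B w u + B w v.
Proof. by rewrite Bsym BDl !(Bsym w). Qed.
Lemma BZr a u w : B w (a *: u) = a * B w u.
Proof. by rewrite Bsym BZl Bsym. Qed.
Lemma Bvv v : B v v = 0.
Proof. by rewrite /polar vv q0 sub0r -opprD add_same // oppr0. Qed.
Lemma qD u v : q (u + v) = q u + q v + B u v.
Proof. rewrite /polar; ring. Qed.
Lemma B_suml I r (P : pred I) (F : I -> V) w :
  B (\sum_(i <- r | P i) F i) w = \sum_(i <- r | P i) B (F i) w.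
Proof. exact: (big_morph _ (fun u v => BDl u v w) (B0l w)). Qed.
Lemma B_sumr I r (P : pred I) (F : I -> V) w :
  B w (\sum_(i <- r | P i) F i) = \sum_(i <- r | P i) B w (F i).
Proof. exact: (big_morph _ (fun u v => BDr u v w) (B0r w)). Qed.

Section WithT.
Hypothesis hnd : polar_nondegenerate q.
Variable T : 'M[k]_(4, N).
Hypothesis HTo : forall i j, B (row i T) (row j T) = 0.
Hypothesis HTq : forall i, q (row i T) = (i == ord0)%:R.
Hypothesis HTf : row_free T.

Definition Xv (v : V) : 'rV[k]_4 := \row_i B v (row i T).
Lemma XvD u v : Xv (u + v) = Xv u + Xv v.
Proof. by apply/rowP => i; rewrite !mxE BDl. Qed.
Lemma XvZ a v : Xv (a *: v) = a *: Xv v.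
Proof. by apply/rowP => i; rewrite !mxE BZl. Qed.
Lemma BvT v y : B v (y *m T) = \sum_i y 0 i * Xv v 0 i.
Proof. by rewrite mulmx_sum_row B_sumr; apply: eq_bigr => i _; rewrite BZr mxE. Qed.
Lemma XvT y : Xv (y *m T) = 0.
Proof.
by apply/rowP => i; rewrite !mxE Bsym BvT big1 // => j _; rewrite mxE HTo mulr0.
Qed.
Lemma BTT y z : B (y *m T) (z *m T) = 0.
Proof. by rewrite BvT XvT big1 // => i _; rewrite mxE mulr0. Qed.
Lemma qT y : q (y *m T) = y 0 0 ^+ 2.
Proof.
have gen (r : seq 'I_4) : q (\sum_(i <- r) y 0 i *: row i T)
    = \sum_(i <- r) y 0 i ^+ 2 * q (row i T).
  elim: r => [|a r IH]; first by rewrite !big_nil q0.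
  rewrite !big_cons qD IH hq.1 BZl B_sumr [X in y 0 a * X]big1 ?mulr0 ?addr0 // => i _.
  by rewrite BZr HTo mulr0.
rewrite mulmx_sum_row gen (bigD1 ord0) //= HTq eqxx mulr1 big1 ?addr0 // => i ni.
by rewrite HTq (negbTE ni) mulr0.
Qed.

Definition mkA (M : 'M[k]_4) v := Xv v *m M *m T.
Definition mkg (M : 'M[k]_4) v := v + mkA M v.

Lemma mkAD M u v : mkA M (u + v) = mkA M u + mkA M v.
Proof. by rewrite /mkA XvD !mulmxDl. Qed.
Lemma mkAZ M a v : mkA M (a *: v) = a *: mkA M v.
Proof. by rewrite /mkA XvZ -!scalemxAl. Qed.
Lemma mkAA M M' v : mkA M (mkA M' v) = 0.
Proof. by rewrite /mkA XvT !mul0mx. Qed.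
Lemma mkg_comp M M' v : mkg M (mkg M' v) = mkg (M + M') v.
Proof.
rewrite /mkg mkAD mkAA addr0 -addrA; congr (_ + _).
by rewrite addrC /mkA mulmxDr mulmxDl.
Qed.
Lemma MM (M : 'M[k]_4) : M + M = 0.
Proof. by apply/matrixP => i j; rewrite !mxE add_same. Qed.
Lemma mkg0 v : mkg 0 v = v.
Proof. by rewrite /mkg /mkA mulmx0 mul0mx addr0. Qed.
Lemma mkg_inv M v : mkg M (mkg M v) = v.
Proof. by rewrite mkg_comp MM mkg0. Qed.
Lemma mkgD M u v : mkg M (u + v) = mkg M u + mkg M v.
Proof. by rewrite /mkg mkAD addrACA. Qed.
Lemma mkg_lin M : klinear (mkg M).
Proof. by move=> a v w; rewrite /mkg mkAD mkAZ scalerDr addrACA. Qed.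

Definition bil (M : 'M[k]_4) (x y : 'rV[k]_4) := \sum_i (x *m M) 0 i * y 0 i.
Lemma bil_sym M x y : M^T = M -> bil M x y = bil M y x.
Proof.
move=> HM; have Ms i j : M i j = M j i by rewrite -{1}HM mxE.
rewrite /bil.
under eq_bigr do rewrite mxE big_distrl /=.
under [RHS]eq_bigr do rewrite mxE big_distrl /=.
rewrite exchange_big; apply: eq_bigr => i _; apply: eq_bigr => j _.
rewrite Ms; ring.
Qed.

Lemma mkg_polar M : M^T = M -> forall v w, B (mkg M v) (mkg M w) = B v w.
Proof.
move=> HM v w; rewrite /mkg !BDl !BDr /mkA BTT addr0.
rewrite [B v (_ *m T)]BvT [B (_ *m T) w]Bsym BvT.
rewrite -/(bil M (Xv w) (Xv v)) -/(bil M (Xv v) (Xv w)) (bil_sym _ _ HM).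
by rewrite -addrA add_same // addr0.
Qed.

Lemma mkg_q M : (forall x, ((x *m M) 0 0) ^+ 2 = bil M x x) ->
  forall v, q (mkg M v) = q v.
Proof.
move=> HM v; rewrite /mkg qD /mkA qT HM BvT -/(bil M (Xv v) (Xv v)).
by rewrite -addrA add_same // addr0.
Qed.

Definition F : 'M[k]_(N, 4) := \matrix_(i, j) B (delta_mx 0 i) (row j T).
Lemma XvF v : Xv v = v *m F.
Proof.
apply/rowP => j; rewrite !mxE {1}(row_sum_delta v) B_suml.
by apply: eq_bigr => i _; rewrite BZl mxE.
Qed.

Lemma lin1_mkg M : 1%:M - lin1_mx (mkg M) = - (F *m M *m T).
Proof.
have E : lin1_mx (mkg M) = 1%:M + F *m M *m T.
  apply/matrixP => i j; rewrite mxE [RHS]mxE /mkg mxE; congr (_ + _).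
    by rewrite !mxE eqxx andTb eq_sym.
  by rewrite /mkA XvF -rowE -!row_mul mxE.
by rewrite E opprD addrA subrr add0r.
Qed.

Lemma Fleft : exists Fl : 'M[k]_(4, N), Fl *m F = 1%:M.
Proof.
have rf : row_free F^T.
  apply/inj_row_free => c hc.
  have H1 i : B (delta_mx 0 i) (c *m T) = 0.
    rewrite BvT; transitivity ((c *m F^T) 0 i); last by rewrite hc mxE.
    by rewrite mxE; apply: eq_bigr => j _; rewrite !mxE.
  have H2 : c *m T = 0.
    apply: hnd => w; rewrite Bsym {1}(row_sum_delta w) B_suml big1 // => i _.
    by rewrite BZl H1 mulr0.
  by apply/eqP; rewrite -(mulmx_free_eq0 _ HTf) H2.
have [Bm hB] := row_freeP rf.
by exists Bm^T; rewrite -[F]trmxK -trmx_mul hB trmx1.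
Qed.

Lemma rankFMT M : M \in unitmx -> \rank (F *m M *m T) = 4%N.
Proof.
move=> uM; rewrite mxrankMfree //.
have [Fl hF] := Fleft.
apply/eqP; rewrite eqn_leq; apply/andP; split.
  by apply: leq_trans (mxrankM_maxr _ _) (rank_leq_col _).
have := mxrankM_maxr Fl (F *m M); rewrite mulmxA hF mul1mx mxrank_unit //.
Qed.

Lemma mkg_dickson M : M \in unitmx -> dickson (mkg M) = false.
Proof. by move=> uM; rewrite /dickson lin1_mkg mxrank_opp rankFMT. Qed.

Lemma mkg_Omega M : M^T = M -> (forall x, ((x *m M) 0 0) ^+ 2 = bil M x x) ->
  M \in unitmx -> in_Omega q (mkg M).
Proof.
move=> HS HQ uM; split; last exact: mkg_dickson.
split; last exact: mkg_q.
split; [exact: mkg_lin | by exists (mkg M) => v; apply: mkg_inv | exact: mkg_polar].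
Qed.

Lemma Xv_surj y : exists w, Xv w = y.
Proof. by have [Fl hF] := Fleft; exists (y *m Fl); rewrite XvF -mulmxA hF mulmx1. Qed.

Lemma mkA_hit M (uM : M \in unitmx) l : exists w, mkA M w = l *: row 0 T.
Proof.
have [w hw] := Xv_surj (l *: (delta_mx 0 0 *m invmx M)).
by exists w; rewrite /mkA hw -!scalemxAl -[delta_mx 0 0 *m invmx M *m M]mulmxA mulVmx // mulmx1 rowE.
Qed.

Lemma mkg_sum M w : w + mkg M w = mkA M w.
Proof. by rewrite /mkg addrA vv add0r. Qed.

Definition mk4 (f : nat -> nat -> bool) : 'M[k]_4 := \matrix_(i, j) (f i j)%:R.
Definition f1 (i j : nat) : bool := match i, j with
  0, 1 | 1, 0 | 1, 1 | 2, 3 | 3, 2 => true | _, _ => false end%N.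
Definition f2 (i j : nat) : bool := match i, j with
  0, 2 | 1, 3 | 2, 0 | 2, 2 | 2, 3 | 3, 1 | 3, 2 => true | _, _ => false end%N.
Definition f3 (i j : nat) : bool := match i, j with
  0, 1 | 0, 2 | 1, 0 | 1, 1 | 1, 3 | 2, 0 | 2, 2 | 3, 1 => true | _, _ => false end%N.
Definition g1 (i j : nat) : bool := match i, j with
  0, 0 | 0, 1 | 1, 0 | 2, 3 | 3, 2 => true | _, _ => false end%N.
Definition g2 (i j : nat) : bool := match i, j with
  0, 0 | 0, 1 | 0, 2 | 1, 0 | 1, 3 | 2, 0 | 3, 1 => true | _, _ => false end%N.
Definition g3 (i j : nat) : bool := match i, j with
  0, 0 | 0, 2 | 0, 3 | 1, 3 | 2, 0 | 2, 3 | 3, 0 | 3, 1 | 3, 2 => true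
  | _, _ => false end%N.

Lemma c2eq (a b e : k) : a - b = 2%:R * e -> a = b.
Proof. by rewrite two0 // mul0r => /eqP; rewrite subr_eq0 => /eqP. Qed.

Ltac simp := rewrite ?mulr1n ?mulr0n ?mul1r ?mulr1 ?mul0r ?mulr0 ?addr0 ?add0r
  ?(add_same char2 1).

Lemma M1sym : (mk4 f1)^T = mk4 f1.
Proof.
apply/matrixP => i j; rewrite !mxE.
by case: i => [[|[|[|[|i]]]] Hi] //; case: j => [[|[|[|[|j]]]] Hj].
Qed.
Lemma M2sym : (mk4 f2)^T = mk4 f2.
Proof.
apply/matrixP => i j; rewrite !mxE.
by case: i => [[|[|[|[|i]]]] Hi] //; case: j => [[|[|[|[|j]]]] Hj].
Qed.
Lemma M3sym : (mk4 f3)^T = mk4 f3.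
Proof.
apply/matrixP => i j; rewrite !mxE.
by case: i => [[|[|[|[|i]]]] Hi] //; case: j => [[|[|[|[|j]]]] Hj].
Qed.

Lemma M1unit : mk4 f1 \in unitmx.
Proof.
suff /mulmx1_unit[] : mk4 f1 *m mk4 g1 = 1%:M by [].
apply/matrixP => i j; rewrite !mxE !big_ord_recl big_ord0 !mxE.
by case: i => [[|[|[|[|i]]]] Hi] //; case: j => [[|[|[|[|j]]]] Hj] //=; simp.
Qed.
Lemma M2unit : mk4 f2 \in unitmx.
Proof.
suff /mulmx1_unit[] : mk4 f2 *m mk4 g2 = 1%:M by [].
apply/matrixP => i j; rewrite !mxE !big_ord_recl big_ord0 !mxE.
by case: i => [[|[|[|[|i]]]] Hi] //; case: j => [[|[|[|[|j]]]] Hj] //=; simp.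
Qed.
Lemma M3unit : mk4 f3 \in unitmx.
Proof.
suff /mulmx1_unit[] : mk4 f3 *m mk4 g3 = 1%:M by [].
apply/matrixP => i j; rewrite !mxE !big_ord_recl big_ord0 !mxE.
by case: i => [[|[|[|[|i]]]] Hi] //; case: j => [[|[|[|[|j]]]] Hj] //=; simp.
Qed.

Lemma M12 : mk4 f2 + mk4 f1 = mk4 f3.
Proof.
apply/matrixP => i j; rewrite !mxE.
by case: i => [[|[|[|[|i]]]] Hi] //; case: j => [[|[|[|[|j]]]] Hj] //=; simp.
Qed.

Ltac expand_q x :=
  rewrite /bil !mxE !big_ord_recl !big_ord0 !mxE !big_ord_recl !big_ord0;
  set x0 := x 0 ord0; set x1 := x 0 (lift ord0 ord0);
  set x2 := x 0 (lift ord0 (lift ord0 ord0));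
  set x3 := x 0 (lift ord0 (lift ord0 (lift ord0 ord0)));
  rewrite !mxE /=; simp.

Lemma M1q x : ((x *m mk4 f1) 0 0) ^+ 2 = bil (mk4 f1) x x.
Proof.
expand_q x.
by apply: (@c2eq _ _ (- (x0 * x1 + x2 * x3))); ring.
Qed.

Lemma M2q x : ((x *m mk4 f2) 0 0) ^+ 2 = bil (mk4 f2) x x.
Proof.
expand_q x.
by apply: (@c2eq _ _ (- (x0 * x2 + x1 * x3 + x2 * x3))); ring.
Qed.

Lemma M3q x : ((x *m mk4 f3) 0 0) ^+ 2 = bil (mk4 f3) x x.
Proof.
expand_q x.
by apply: (@c2eq _ _ (x1 * x2 - (x0 * x1 + x0 * x2 + x1 * x3))); ring.
Qed.

Lemma id_Omega : in_Omega q id.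
Proof.
split; last first.
  rewrite /dickson (_ : lin1_mx id = 1%:M) ?subrr ?mxrank0 //.
  by apply/matrixP => i j; rewrite !mxE eqxx andTb eq_sym.
split=> //; split => //; by exists id.
Qed.

Lemma no_split_T (R : realType) (alpha : V -> V -> R[i]) :
  good_cocycle q alpha -> ~ ext_splits alpha (in_Omega q).
Proof.
move=> ha.
pose g := mkg (mk4 f2); pose h := mkg (mk4 f1).
have Og : in_Omega q g := mkg_Omega M2sym M2q M2unit.
have Oh : in_Omega q h := mkg_Omega M1sym M1q M1unit.
have ghE : g \o h = mkg (mk4 f3).
  by apply: functional_extensionality => v; rewrite /= /g /h mkg_comp M12.
have Ogh : in_Omega q (g \o h) by rewrite ghE; exact: mkg_Omega M3sym M3q M3unit.
have [l hl] := trace_sq_nz char2.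
have [w1 e1] := mkA_hit M2unit l.
have [w2 e2] := mkA_hit M1unit l.
have [w3 e3] := mkA_hit M3unit l.
apply: (@no_split _ _ _ q char2 alpha ha _ g h (l *: row 0 T) w1 w2 w3
  id_Omega Og Oh Ogh).
- exact: mkg_inv.
- exact: mkg_inv.
- by move=> v; rewrite /g /h !mkg_comp addrC.
- exact: mkgD.
- exact: mkgD.
- exact: mkg_q M2q.
- exact: mkg_q M1q.
- by rewrite mkg_sum e1.
- by rewrite mkg_sum e2.
- by rewrite (_ : g (h w3) = (g \o h) w3) // ghE mkg_sum e3.
- by rewrite hq.1 HTq eqxx mulr1n mulr1.
Qed.
End WithT.

Section Greedy.
Hypothesis hnd2 : polar_nondegenerate q.

Lemma rowv (u : V) (i : 'I_1) : row i u = u.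
Proof. by apply/rowP => j; rewrite mxE ord1. Qed.

Lemma extend m (S : 'M[k]_(m.+1, N)) : (m.+1 < n)%N -> row_free S ->
  (forall i j, B (row i S) (row j S) = 0) ->
  (forall i, q (row i S) = (nat_of_ord i == 0%N)%:R) ->
  exists v : V, [/\ forall i, B (row i S) v = 0, q v = 0 & row_free (col_mx S v)].
Proof.
move=> hm fS oS qS.
pose FS : 'M[k]_(N, m.+1) := \matrix_(i, j) B (delta_mx 0 i) (row j S).
pose W := kermx FS.
have rW : (m.+1 < \rank W)%N.
  rewrite mxrank_ker; have := rank_leq_col FS; lia.
have nWS : ~~ (W <= S)%MS.
  apply/negP => /mxrankS; rewrite (eqP fS); lia.
case/row_subPn: nWS => i ni.
set v0 := row i W in ni.
have v0F : v0 *m FS = 0 by rewrite /v0 -row_mul mulmx_ker row0.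
have Bv0 j : B (row j S) v0 = 0.
  rewrite Bsym {1}(row_sum_delta v0) B_suml.
  transitivity ((v0 *m FS) 0 j); last by rewrite v0F mxE.
  by rewrite mxE; apply: eq_bigr => l _; rewrite BZl /FS !mxE.
have [lam hlam] := sqr_surj char2 (q v0).
pose v := v0 + lam *: row 0 S.
have nvS : ~~ (v <= S)%MS.
  apply: contra ni => vS.
  have -> : v0 = v - lam *: row 0 S by rewrite /v addrK.
  by apply: addmx_sub vS _; rewrite -scaleNr; apply: scalemx_sub; apply: row_sub.
exists v; split.
- by move=> j; rewrite BDr BZr Bv0 oS mulr0 addr0.
- rewrite /v qD hq.1 qS /= mulr1n mulr1 hlam BZr (Bsym v0) Bv0 mulr0 addr0.
  exact: add_same.
apply/inj_row_free => u hu.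
rewrite -(hsubmxK u) mul_row_col in hu.
set a := lsubmx u in hu; set c := rsubmx u in hu.
have cv : c *m v = c 0 0 *: v by rewrite {1}(mx11_scalar c) mul_scalar_mx.
have c0 : c 0 0 = 0.
  apply/eqP/negP => cnz; move/negP: nvS; apply.
  have : (c 0 0 *: v <= S)%MS.
    rewrite -cv (_ : c *m v = (- a) *m S) ?submxMl //.
    by apply/eqP; rewrite mulNmx -addr_eq0 addrC hu.
  by move/(scalemx_sub (c 0 0)^-1); rewrite scalerA (mulVf (introN idP cnz)) scale1r.
have cz : c = 0 by apply/rowP => j; rewrite ord1 c0 mxE.
rewrite cz mul0mx addr0 in hu.
have az : a = 0 by apply/eqP; rewrite -(mulmx_free_eq0 _ fS) hu.
by rewrite -(hsubmxK u) -/a -/c az cz row_mx0.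
Qed.

Lemma rowC m (S : 'M[k]_(m.+1, N)) (v : V) (i : 'I_(m.+1 + 1)) :
  row i (col_mx S v) = match split i with inl j => row j S | inr _ => v end.
Proof.
rewrite -{1}(splitK i); case: (split i) => j /=; first by rewrite rowKu.
by rewrite rowKd rowv.
Qed.

Lemma extend_o m (S : 'M[k]_(m.+1, N)) v :
  (forall i j, B (row i S) (row j S) = 0) ->
  (forall i, B (row i S) v = 0) ->
  forall i j, B (row i (col_mx S v)) (row j (col_mx S v)) = 0.
Proof.
move=> oS Bv i j; rewrite !rowC.
case: (split i) => i'; case: (split j) => j' //.
- by rewrite Bsym.
- exact: Bvv.
Qed.

Lemma extend_q m (S : 'M[k]_(m.+1, N)) v :
  (forall i, q (row i S) = (nat_of_ord i == 0%N)%:R) -> q v = 0 ->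
  forall i, q (row i (col_mx S v)) = (nat_of_ord i == 0%N)%:R.
Proof.
move=> qS qv i; rewrite rowC -{2}(splitK i).
by case: (split i) => j //=; rewrite qv.
Qed.

Lemma exists_T : (4 <= n)%N -> exists T : 'M[k]_(4, N),
  [/\ (forall i j, B (row i T) (row j T) = 0),
      (forall i, q (row i T) = (i == ord0)%:R) & row_free T].
Proof.
move=> hn.
have hN : (0 < N)%N by lia.
have [a qa] : exists a : V, q a != 0.
  have [a ha|Hall] := pickP (fun a : V => q a != 0); first by exists a.
  exfalso; have qz a : q a = 0 by move: (Hall a) => /negbFE/eqP.
  pose e : V := delta_mx 0 (Ordinal hN).
  have : e = 0 by apply: hnd2 => w; rewrite /polar !qz subrr subr0.
  move/(congr1 (fun z : V => z 0 (Ordinal hN))); rewrite !mxE !eqxx /= mulr1n.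
  by move/eqP; rewrite oner_eq0.
have [mu hmu] := sqr_surj char2 (q a)^-1.
pose t0 : V := mu *: a.
have qt0 : q t0 = 1 by rewrite hq.1 hmu mulVf.
have S1f : row_free (t0 : 'M_(1, N)).
  apply/inj_row_free => c hc.
  have c0 : c 0 0 = 0.
    apply/eqP/negP => cnz; move: hc; rewrite {1}(mx11_scalar c) mul_scalar_mx.
    move/eqP; rewrite scaler_eq0 (negbTE (introN idP cnz)) /= => /eqP t0z.
    by move: qt0; rewrite t0z q0 => /eqP; rewrite eq_sym oner_eq0.
  by apply/rowP => j; rewrite ord1 c0 mxE.
have S1o : forall i j : 'I_1, B (row i t0) (row j t0) = 0.
  by move=> i j; rewrite !rowv Bvv.
have S1q : forall i : 'I_1, q (row i t0) = (nat_of_ord i == 0%N)%:R.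
  by move=> i; rewrite rowv ord1 qt0.
have h1 : (1 < n)%N by lia.
have h2 : (2 < n)%N by lia.
have h3 : (3 < n)%N by lia.
have [v2 [B2 q2 f2]] := extend (S := t0) h1 S1f S1o S1q.
have o2 := extend_o S1o B2; have q2' := extend_q S1q q2.
have [v3 [B3 q3 f3]] := extend h2 f2 o2 q2'.
have o3 := extend_o o2 B3; have q3' := extend_q q2' q3.
have [v4 [B4 q4 f4]] := extend h3 f3 o3 q3'.
exists (col_mx (col_mx (col_mx (t0 : 'M_(1, N)) v2) v3) v4); split => //.
- exact: extend_o o3 B4.
- move=> i; rewrite (extend_q q3' q4).
  by case: i => [[|i] Hi].
Qed.

Lemma main_Omega (R : realType) (alpha : V -> V -> R[i]) : (4 <= n)%N ->
  good_cocycle q alpha -> ~ ext_splits alpha (in_Omega q).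
Proof.
move=> hn ha; have [T [o qq f]] := exists_T hn.
exact: (no_split_T hnd2 o qq f ha).
Qed.
End Greedy.
End Basic.

Lemma ext_mono (k : finFieldType) (m : nat) (R : realType)
  (alpha : 'rV[k]_m -> 'rV[k]_m -> R[i]) (P P' : ('rV[k]_m -> 'rV[k]_m) -> Prop) :
  (forall g, P' g -> P g) -> ext_splits alpha P -> ext_splits alpha P'.
Proof.
move=> hPP [s [H1 H2]]; exists s; split=> [g Pg|g h Pg Ph].
  exact: H1 (hPP _ Pg).
exact: H2 (hPP _ Pg) (hPP _ Ph).
Qed.

Theorem proposition5p3 (k : finFieldType) (n : nat) (R : realType)
  (q : 'rV[k]_(n.*2) -> k) (alpha : 'rV[k]_(n.*2) -> 'rV[k]_(n.*2) -> R[i]) :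
  2%N \in [pchar k] ->
  (4 <= n)%N ->
  is_quadratic_form q ->
  polar_nondegenerate q ->
  good_cocycle q alpha ->
  [/\ ~ ext_splits alpha (in_Sp q),
      ~ ext_splits alpha (in_O q)
    & ~ ext_splits alpha (in_Omega q)].
Proof.
move=> char2 hn hq hnd ha.
have HO : ~ ext_splits alpha (in_Omega q) := main_Omega char2 hq hnd hn ha.
split => // H; apply: HO; apply: ext_mono H.
  by move=> g [[Sp _] _].
by move=> g [O _].
Qed.
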